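(* A rooted labeled forest that avoids $132$ avoids $2314$ if and only if it is a $P_1$-forest.
   Context: Rooted labeled forests are unordered forests with a distinguished root in each component and distinct integer labels $L(v)$. The ancestors of $v$ are the vertices on the path from the root of its component to $v$ (including $v$). An instance of a pattern $\pi$ of length $k$ is a sequence $v_1,\dots,v_k$ with $v_i$ a strict ancestor of $v_{i+1}$ and labels in the same relative order as $\pi$; a forest avoids $\pi$ if it has no instance. A vertex $v$ is a top-down minimum (TDM) if $L(u)\ge L(v)$ for every ancestor $u$ of $v$; other vertices are non-TDM. A non-TDM vertex $v$ is special if the path from the root to $v$ contains vertices $v_1,v_2,v_3,v_4$ in that order (not necessarily consecutive) with $v_1,v_3$ TDM and $v_2,v_4$ non-TDM. The ceiling of a special vertex $v$ is its lowest ancestor $u$ such that the path from $u$ to $v$ contains vertices $v_1,v_2,v_3,v_4$ in that order with $v_1,v_3$ TDM and $v_2,v_4$ non-TDM. A $P_1$-forest is a forest in which every special vertex $v$ with ceiling $u$ satisfies $L(u)>L(v)$. *)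

(* Defs.v *)
From mathcomp Require Import all_boot all_order all_algebra.
Set Implicit Arguments. Unset Strict Implicit. Unset Printing Implicit Defensive.
Import Order.TTheory GRing.Theory Num.Theory.
Local Open Scope ring_scope.

(* A rooted forest on a finite vertex type T is given by a parent function
   par : T -> option T (None = v is a root), with no cycles: iterating the
   parent map from any vertex eventually reaches None. *)

Section Forest.
Variable T : finType.
Variable par : T -> option T.

Definition up (k : nat) (v : T) : option T := iter k (obind par) (Some v).

Definition is_forest : Prop := forall v : T, exists k, up k v = None.

Definition ancestor (u v : T) : Prop := exists k, up k v = Some u.
Definition sancestor (u v : T) : Prop := exists k, up k.+1 v = Some u.

Variable L : T -> int.

Definition instance (pi : seq nat) (s : seq T) : Prop :=
  size s = size pi /\
  (forall i, i.+1 < size s -> forall x0, sancestor (nth x0 s i) (nth x0 s i.+1))%N /\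
  (forall i j, (i < size s)%N -> (j < size s)%N -> forall x0,
      (L (nth x0 s i) < L (nth x0 s j)) = (nth 0%N pi i < nth 0%N pi j)%N).

Definition avoids (pi : seq nat) : Prop := forall s, ~ instance pi s.

Definition TDM (v : T) : Prop := forall u, ancestor u v -> L v <= L u.

Definition has_TNTN_from (u v : T) : Prop :=
  exists v1 v2 v3 v4,
    [/\ ancestor u v1, sancestor v1 v2, sancestor v2 v3, sancestor v3 v4
      & ancestor v4 v] /\
    [/\ TDM v1, ~ TDM v2, TDM v3 & ~ TDM v4].

(* the path from the root to v contains such vertices: equivalently some
   ancestor u of v works (the root of v's component is an ancestor of all
   ancestors of v). *)
Definition special (v : T) : Prop :=
  ~ TDM v /\ exists u, ancestor u v /\ has_TNTN_from u v.

Definition ceiling (u v : T) : Prop :=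
  [/\ ancestor u v, has_TNTN_from u v &
      forall w, ancestor w v -> sancestor u w -> ~ has_TNTN_from w v].

Definition P1_forest : Prop :=
  forall v u, special v -> ceiling u v -> L v < L u.

End Forest.

(* Main.v *)
Require Import Defs.
From mathcomp Require Import all_boot all_order all_algebra.
From Stdlib Require Import Classical.
Import Order.TTheory GRing.Theory Num.Theory.
Local Open Scope ring_scope.
Set Implicit Arguments. Unset Strict Implicit.

Lemma up_add (T : finType) (par : T -> option T) m n v :
  up par (m + n) v = obind (up par m) (up par n v).
Proof.
elim: m => [|m IH]; first by case: (up par n v).
move: IH; rewrite addSn /up iterS => ->.
by case: (iter n _ (Some v)) => //= y; rewrite iterS.
Qed.

Lemma up_trans (T : finType) (par : T -> option T) m n x y z :
  up par m y = Some x -> up par n z = Some y -> up par (m + n) z = Some x.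
Proof. by move=> H1 H2; rewrite up_add H2. Qed.

Lemma no_cycle (T : finType) (par : T -> option T) (Hf : is_forest par) k x :
  up par k.+1 x = Some x -> False.
Proof.
move=> H.
have Hq : forall q, up par (q * k.+1) x = Some x.
  elim=> [|q IH] //; rewrite mulSn; exact: up_trans H IH.
have [n Hn] := Hf x.
have := Hq n; rewrite -(subnK (leq_pmulr n (ltn0Sn k))) up_add Hn.
done.
Qed.

Lemma up_inj (T : finType) (par : T -> option T) (Hf : is_forest par) i j z x :
  up par i z = Some x -> up par j z = Some x -> i = j.
Proof.
wlog: i j / (i <= j)%N.
  move=> W Hi Hj; case: (leqP i j) => h; first exact: W h Hi Hj.
  by symmetry; apply: (W j i) => //; apply: ltnW.
move=> hij Hi Hj; case: (ltngtP i j) => // h.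
  exfalso; move: Hj; rewrite -(subnK hij) up_add Hi /=.
  rewrite -(subnSK h) => /(no_cycle Hf) //.
by move: hij; rewrite leqNgt h.
Qed.

Lemma anc_cmp (T : finType) (par : T -> option T) x y z :
  ancestor par x z -> ancestor par y z -> ancestor par x y \/ sancestor par y x.
Proof.
move=> [i Hi] [j Hj]; case: (leqP j i) => h.
  left; exists (i - j)%N; by rewrite -(subnK h) up_add Hj in Hi.
right; exists (j - i).-1; rewrite prednK ?subn_gt0 //.
by rewrite -(subnK (ltnW h)) up_add Hi in Hj.
Qed.

Lemma anc_anc (T : finType) (par : T -> option T) x y z :
  ancestor par x y -> ancestor par y z -> ancestor par x z.
Proof. move=> [m Hm] [n Hn]; exists (m + n)%N; exact: up_trans Hm Hn. Qed.

Lemma sanc_anc (T : finType) (par : T -> option T) x y z :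
  sancestor par x y -> ancestor par y z -> sancestor par x z.
Proof. move=> [m Hm] [n Hn]; exists (m + n)%N; rewrite -addSn; exact: up_trans Hm Hn. Qed.

Lemma anc_sanc (T : finType) (par : T -> option T) x y z :
  ancestor par x y -> sancestor par y z -> sancestor par x z.
Proof. move=> [m Hm] [n Hn]; exists (m + n)%N; rewrite -addnS; exact: up_trans Hm Hn. Qed.

Lemma sanc_ancW (T : finType) (par : T -> option T) x y :
  sancestor par x y -> ancestor par x y.
Proof. by move=> [m Hm]; exists m.+1. Qed.

Lemma anc_refl (T : finType) (par : T -> option T) x : ancestor par x x.
Proof. by exists 0%N. Qed.

Lemma anc_split (T : finType) (par : T -> option T) x y :
  ancestor par x y -> x = y \/ sancestor par x y.
Proof. move=> [[|m] Hm]; [left; by case: Hm | right; by exists m]. Qed.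

Lemma sanc_neq (T : finType) (par : T -> option T) (Hf : is_forest par) x y :
  sancestor par x y -> x <> y.
Proof. move=> [m Hm] E; subst; exact: (no_cycle Hf Hm). Qed.

Lemma exists_minL (T : finType) (L : T -> int) (P : T -> Prop) x :
  P x -> exists m, P m /\ forall y, P y -> L m <= L y.
Proof.
move=> Px.
suff: forall s : seq T, (exists2 z, z \in s & P z) ->
  exists m, P m /\ forall y, y \in s -> P y -> L m <= L y.
  move=> /(_ (enum T)) []; first by exists x; rewrite ?mem_enum.
  move=> m [Pm Hm]; exists m; split => // y Py; apply: Hm; rewrite ?mem_enum //.
elim=> [|a s IH]; first by case.
move=> Hex; case: (classic (exists2 z, z \in s & P z)) => [/IH [m [Pm Hm]]|N].
  case: (classic (P a /\ L a < L m)) => [[Pa Ha]|N].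
    exists a; split => // y; rewrite inE => /orP [/eqP -> //|ys Py].
    exact: ltW (lt_le_trans Ha (Hm y ys Py)).
  exists m; split => // y; rewrite inE => /orP [/eqP -> Py|]; last exact: Hm.
  by rewrite leNgt; apply/negP => h; apply: N.
case: Hex => z; rewrite inE => /orP [/eqP -> Pa|zs Pz]; last by exfalso; apply: N; exists z.
exists a; split => // y; rewrite inE => /orP [/eqP -> //|ys Py].
by exfalso; apply: N; exists y.
Qed.

Lemma anc_min (T : finType) (par : T -> option T) (L : T -> int) v :
  exists m, [/\ ancestor par m v, TDM par L m &
                forall w, ancestor par w v -> L m <= L w].
Proof.
have [m [Am Hm]] := @exists_minL _ L (fun w => ancestor par w v) v (anc_refl par v).
exists m; split => // w Aw; apply: Hm; exact: anc_anc Aw Am.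
Qed.

Lemma ceiling_exists (T : finType) (par : T -> option T) (L : T -> int)
  (Hf : is_forest par) w0 d :
  ancestor par w0 d -> has_TNTN_from par L w0 d -> exists u, ceiling par L u d.
Proof.
move=> [k Hk]; elim/ltn_ind: k w0 Hk => k IH w0 Hk Hh.
case: (classic (exists w, [/\ ancestor par w d, sancestor par w0 w &
                             has_TNTN_from par L w d])).
  move=> [w [[j Hj] [i Hi] Hw]].
  have E := up_inj Hf Hk (up_trans Hi Hj).
  apply: (IH j _ w Hj Hw); by rewrite E addSn ltnS leq_addl.
move=> N; exists w0; split => //; first by exists k.
by move=> w Aw Sw Hw; apply: N; exists w.
Qed.

Lemma ceiling_v1 (T : finType) (par : T -> option T) (L : T -> int) u v :
  ceiling par L u v -> exists v2 v3 v4,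
  [/\ sancestor par u v2, sancestor par v2 v3, sancestor par v3 v4
    & ancestor par v4 v] /\
  [/\ TDM par L u, ~ TDM par L v2, TDM par L v3 & ~ TDM par L v4].
Proof.
move=> [Au [v1 [v2 [v3 [v4 [[A1 S2 S3 S4 A5] [T1 N2 T3 N4]]]]]] Hmin].
case: (anc_split A1) => [E|S1]; first by subst; exists v2, v3, v4.
exfalso; apply: (Hmin v1) S1 _.
  apply: sanc_ancW; apply: sanc_anc S2 _; apply: sanc_ancW.
  apply: sanc_anc S3 _; apply: sanc_ancW; exact: sanc_anc S4 A5.
by exists v1, v2, v3, v4; split; split => //; apply: anc_refl.
Qed.

Lemma mk_instance (T : finType) (par : T -> option T) (L : T -> int)
  (pi : seq nat) (s : seq T) :
  size s = size pi -> uniq pi ->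
  (forall i, (i.+1 < size s)%N -> forall x0,
      sancestor par (nth x0 s i) (nth x0 s i.+1)) ->
  (forall i j, (i < size s)%N -> (j < size s)%N ->
      (nth 0%N pi i < nth 0%N pi j)%N -> forall x0,
      L (nth x0 s i) < L (nth x0 s j)) ->
  instance par L pi s.
Proof.
move=> Hs Hu Hc Ho; split => //; split => // i j Hi Hj x0.
case: (ltngtP (nth 0%N pi i) (nth 0%N pi j)) => h.
- by rewrite (Ho i j).
- apply/negbTE; rewrite -leNgt; apply: ltW; exact: Ho.
- rewrite Hs in Hi Hj.
  by move/eqP: h; rewrite (nth_uniq 0%N Hi Hj Hu) => /eqP ->; rewrite ltxx.
Qed.

Lemma notTDM (T : finType) (par : T -> option T) (L : T -> int) v :
  ~ TDM par L v -> exists w, ancestor par w v /\ L w < L v.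
Proof.
move=> N; apply: NNPP => N2; apply: N => w Aw.
rewrite leNgt; apply/negP => h; apply: N2; by exists w.
Qed.

Unset Implicit Arguments.
Theorem lemma3p10 (T : finType) (par : T -> option T) (L : T -> int)
  (Hforest : is_forest par) (HL : injective L) :
  avoids par L [:: 1; 3; 2]%N ->
  (avoids par L [:: 2; 3; 1; 4]%N <-> P1_forest par L).
Proof.
move=> H132; split.
- move=> H2314 v u [Nv _] Hc.
  have Hc' := Hc; case: Hc' => [Auv _ Hmin].
  have [v2 [v3 [v4 [[S2 S3 S4 A5] [Tu N2 T3 N4]]]]] := ceiling_v1 Hc.
  rewrite ltNge; apply/negP => Huv.
  have Luv : L u < L v.
    rewrite lt_neqAle Huv andbT; apply/negP => /eqP /HL E.
    by subst; apply: Nv.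
  have [w [Aw Lw]] := notTDM N2.
  have [m [Am Tm Hm]] := anc_min par L v2.
  have Lm : L m < L v2 := le_lt_trans (Hm w Aw) Lw.
  have Av3v : sancestor par v3 v by apply: sanc_anc S4 A5.
  have Av2v : sancestor par v2 v by apply: sanc_anc S3 (sanc_ancW Av3v).
  have Lu2 : L u < L v2.
    case: (anc_cmp Am (sanc_ancW S2)) => [Amu|Sum].
      exact: le_lt_trans (Tu m Amu) Lm.
    exfalso; apply: (Hmin m).
    + exact: anc_anc Am (sanc_ancW Av2v).
    + exact: Sum.
    exists m, v2, v3, v4; split; split => //; first exact: anc_refl.
    case: (anc_split Am) => // E; subst; by rewrite ltxx in Lm.
  have Su3 : sancestor par u v3 by apply: sanc_anc S2 (sanc_ancW S3).
  have L3u : L v3 < L u.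
    have Au3 := sanc_ancW Su3.
    rewrite lt_neqAle (T3 u Au3) andbT; apply/negP => /eqP /HL E.
    exact: (sanc_neq Hforest Su3).
  have L2v : L v2 < L v.
    rewrite lt_neqAle; apply/andP; split.
      by apply/negP => /eqP /HL E; apply: (sanc_neq Hforest Av2v).
    rewrite leNgt; apply/negP => h.
    apply: (H132 [:: u; v2; v]); apply: mk_instance => //.
      by move=> [|[|i]] //= _ x0.
    move=> [|[|[|i]]] [|[|[|j]]] //= _ _ _ x0.
  apply: (H2314 [:: u; v2; v3; v]); apply: mk_instance => //.
    by move=> [|[|[|i]]] //= _ x0.
  have L3v2 : L v3 < L v2 := lt_trans L3u Lu2.
  have L3v : L v3 < L v := lt_trans L3v2 L2v.
  move=> [|[|[|[|i]]]] [|[|[|[|j]]]] //= _ _ _ x0.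
- move=> HP s [Hs [Hch Hord]].
  case: s Hs Hch Hord => [|a [|b [|c [|d [|? ?]]]]] // _ Hch Hord.
  have Sab : sancestor par a b := Hch 0%N isT a.
  have Sbc : sancestor par b c := Hch 1%N isT a.
  have Scd : sancestor par c d := Hch 2%N isT a.
  have Lab : L a < L b by rewrite (Hord 0%N 1%N isT isT a).
  have Lca : L c < L a by rewrite (Hord 2%N 0%N isT isT a).
  have Lbd : L b < L d by rewrite (Hord 1%N 3%N isT isT a).
  have [t [At Tt Ht]] := anc_min par L a.
  have [m [Am Tm Hm]] := anc_min par L c.
  have Lmc : L m <= L c := Hm c (anc_refl par c).
  have Smb : sancestor par b m.
    case: (anc_cmp Am (sanc_ancW Sbc)) => [Amb|] //.
    exfalso; case: (anc_split Amb) => [E|Smb].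
      subst; have := le_lt_trans Lmc (lt_trans Lca Lab); by rewrite ltxx.
    have Smc : sancestor par m c := sanc_anc Smb (sanc_ancW Sbc).
    have Lmc' : L m < L c.
      rewrite lt_neqAle Lmc andbT; apply/negP => /eqP /HL E.
      exact: (sanc_neq Hforest Smc).
    apply: (H132 [:: m; b; c]); apply: mk_instance => //.
      by move=> [|[|i]] //= _ x0.
    have Lcb := lt_trans Lca Lab.
    move=> [|[|[|i]]] [|[|[|j]]] //= _ _ _ x0.
    exact: lt_trans Lmc' Lcb.
  have Ad : ancestor par a d.
    apply: sanc_ancW; apply: sanc_anc Sab _; apply: sanc_ancW.
    exact: sanc_anc Sbc (sanc_ancW Scd).
  have Nd : ~ TDM par L d.
    move=> H; have := H a Ad; rewrite leNgt (lt_trans Lab Lbd) //.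
  have Htd : has_TNTN_from par L t d.
    exists t, b, m, d; split; split => //; try exact: anc_refl.
    + exact: anc_sanc At Sab.
    + exact: anc_sanc Am Scd.
    + move=> H; have := H a (sanc_ancW Sab); by rewrite leNgt Lab.
  have Atd : ancestor par t d := anc_anc At Ad.
  have [u Hc] := ceiling_exists Hforest Atd Htd.
  have Hc' := Hc; case: Hc' => [Aud _ Hmin].
  have [v2 [v3 [v4 [_ [Tu _ _ _]]]]] := ceiling_v1 Hc.
  have := HP d u (conj Nd (ex_intro _ t (conj Atd Htd))) Hc.
  case: (anc_cmp Atd Aud) => [Atu|Sut]; last by exfalso; exact: (Hmin t Atd Sut Htd).
  have Lud : L u < L d.
    apply: le_lt_trans (Tu t Atu) _; apply: le_lt_trans (Ht a (anc_refl par a)) _.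
    exact: lt_trans Lab Lbd.
  by move=> h; have := lt_trans h Lud; rewrite ltxx.
Qed.
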